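(* Fix $\ell, \tilde\ell \in \mathbb{R}_{>0}$ and $\delta \in \mathbb{R}$. The map $f \mapsto C(f)$ is one-to-one when restricted to the set of barcodes \[ \Big\{ f = x^{\tilde\alpha}y^{\tilde\ell} + \sum_{i=1}^n x^{\alpha_i}y^{\ell} \ :\ n\ge 0,\ \tilde\alpha,\alpha_i\in\mathbb{R},\ \Delta(f) = \delta \Big\}. \]
   Context: A barcode is a finite formal sum $f = \sum_{j} x^{a_j}y^{l_j}$ with $a_j \in \mathbb{R}$, $l_j \in \mathbb{R}_{>0}$ (a finite multiset of bars). Its critical series is $C(f) = \sum_j x^{a_j} - \sum_j x^{a_j+l_j}$ (a finite integer combination of symbols $x^g$, $g\in\mathbb{R}$), and its drift is $\Delta(f) = \sum_j a_j$, the sum of the birth grades of all bars. *)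

(* Defs.v *)
From Stdlib Require Import Reals List Permutation ZArith.
Open Scope R_scope.

(* A bar x^a y^l is the pair (a, l). A barcode is a finite multiset of bars,
   represented by a list; two barcodes are equal iff the lists are
   permutations of each other. *)
Definition bar := (R * R)%type.
Definition barcode := list bar.

Definition is_barcode (f : barcode) : Prop :=
  forall b, In b f -> 0 < snd b.

Definition barcode_eq (f g : barcode) : Prop := Permutation f g.

Definition indicator (u g : R) : Z :=
  if Req_EM_T u g then 1%Z else 0%Z.

(* The critical series C(f) = sum_j x^{a_j} - sum_j x^{a_j+l_j}, a finite
   integer combination of symbols x^g, represented by its coefficient
   function g |-> coefficient of x^g. *)
Fixpoint crit (f : barcode) (g : R) : Z :=
  match f with
  | nil => 0%Z
  | (a, l) :: f' => (indicator a g - indicator (a + l) g + crit f' g)%Z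
  end.

Fixpoint drift (f : barcode) : R :=
  match f with
  | nil => 0
  | (a, _) :: f' => a + drift f'
  end.

Definition in_family (l lt delta : R) (f : barcode) : Prop :=
  exists (at_ : R) (alphas : list R),
    barcode_eq f ((at_, lt) :: map (fun a => (a, l)) alphas) /\ drift f = delta.

(* Main.v *)
Require Import Defs.
From Stdlib Require Import Reals List Permutation ZArith Lra Lia Psatz.
Open Scope R_scope.

Lemma crit_perm f g : Permutation f g -> forall z, crit f z = crit g z.
Proof.
  induction 1; intro z; simpl.
  - reflexivity.
  - destruct x as [a b]; rewrite IHPermutation; reflexivity.
  - destruct x as [a b]; destruct y as [c d]; lia.
  - rewrite IHPermutation1, IHPermutation2; reflexivity.
Qed.

Lemma drift_perm f g : Permutation f g -> drift f = drift g.
Proof.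
  induction 1; simpl.
  - reflexivity.
  - destruct x as [a b]; rewrite IHPermutation; reflexivity.
  - destruct x as [a b]; destruct y as [c d]; lra.
  - congruence.
Qed.

Fixpoint Smom (h : R -> R) (f : barcode) : R :=
  match f with
  | nil => 0
  | (a, l) :: f' => h a - h (a + l) + Smom h f'
  end.

Fixpoint pts (f : barcode) : list R :=
  match f with
  | nil => nil
  | (a, l) :: f' => a :: (a + l) :: pts f'
  end.

Fixpoint sumZ (U : list R) (c : R -> Z) (h : R -> R) : R :=
  match U with
  | nil => 0
  | u :: U' => IZR (c u) * h u + sumZ U' c h
  end.

Lemma sumZ_ext U c1 c2 h : (forall g, c1 g = c2 g) -> sumZ U c1 h = sumZ U c2 h.
Proof. intro H; induction U; simpl; [reflexivity| rewrite H, IHU; reflexivity]. Qed.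

Lemma sumZ_lin U c1 c2 c3 h :
  sumZ U (fun g => (c1 g - c2 g + c3 g)%Z) h = sumZ U c1 h - sumZ U c2 h + sumZ U c3 h.
Proof.
  induction U; simpl; [lra|]. rewrite IHU, plus_IZR, minus_IZR. ring.
Qed.

Lemma sumZ_ind_out U a h : ~ In a U -> sumZ U (indicator a) h = 0.
Proof.
  induction U; simpl; intro H; [reflexivity|].
  unfold indicator at 1. destruct (Req_EM_T a a0).
  - exfalso; apply H; left; auto.
  - rewrite IHU by tauto. simpl. ring.
Qed.

Lemma sumZ_ind_in U a h : NoDup U -> In a U -> sumZ U (indicator a) h = h a.
Proof.
  induction U; simpl; intros Hn Hi; [contradiction|].
  inversion Hn; subst.
  unfold indicator at 1. destruct (Req_EM_T a a0).
  - subst. rewrite sumZ_ind_out by auto. simpl. ring.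
  - destruct Hi as [Hi|Hi]; [congruence|]. rewrite IHU by auto. simpl. ring.
Qed.

Lemma sumZ_crit U h f : NoDup U -> (forall x, In x (pts f) -> In x U) ->
  sumZ U (crit f) h = Smom h f.
Proof.
  intros Hn. induction f as [|[a l] f IH]; simpl; intro Hs.
  - clear Hn Hs. induction U; simpl; [reflexivity|]. rewrite IHU. ring.
  - rewrite (sumZ_lin U (indicator a) (indicator (a+l)) (crit f)).
    rewrite !sumZ_ind_in by auto. rewrite IH by auto. ring.
Qed.

Lemma S_crit h f1 f2 : (forall g, crit f1 g = crit f2 g) -> Smom h f1 = Smom h f2.
Proof.
  intro H.
  set (U := nodup Req_EM_T (pts f1 ++ pts f2)).
  assert (HU : NoDup U) by apply NoDup_nodup.
  rewrite <- (sumZ_crit U h f1), <- (sumZ_crit U h f2); auto.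
  - apply sumZ_ext; auto.
  - intros x Hx; apply nodup_In; apply in_or_app; auto.
  - intros x Hx; apply nodup_In; apply in_or_app; auto.
Qed.

Definition mp (l : R) (A : list R) : barcode := map (fun a => (a, l)) A.

Lemma S_id l A : Smom (fun x => x) (mp l A) = - INR (length A) * l.
Proof.
  unfold mp in *; induction A; simpl; [ring|]. rewrite IHA. change (match length A with 0%nat => 1 | S _ => INR (length A) + 1 end) with (INR (S (length A))). rewrite S_INR. ring.
Qed.

Lemma S_sq l A : Smom (fun x => x * x) (mp l A) = -2 * l * drift (mp l A) - INR (length A) * l * l.
Proof.
  unfold mp in *; induction A; simpl; [ring|]. rewrite IHA. change (match length A with 0%nat => 1 | S _ => INR (length A) + 1 end) with (INR (S (length A))). rewrite S_INR. ring.
Qed.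

Fixpoint cnt (A : list R) (m : R) : Z :=
  match A with nil => 0%Z | a :: A' => (indicator a m + cnt A' m)%Z end.

Lemma cnt_nonneg A m : (0 <= cnt A m)%Z.
Proof.
  induction A; simpl; [lia|]. unfold indicator; destruct (Req_EM_T a m); lia.
Qed.

Lemma cnt_in A m : In m A -> (1 <= cnt A m)%Z.
Proof.
  induction A; simpl; [tauto|]. intro H.
  pose proof (cnt_nonneg A m).
  unfold indicator; destruct (Req_EM_T a m).
  - lia.
  - destruct H; [congruence|]. specialize (IHA H). lia.
Qed.

Lemma cnt_pos A m : (1 <= cnt A m)%Z -> In m A.
Proof.
  induction A; simpl; [lia|]. unfold indicator; destruct (Req_EM_T a m); intro H.
  - left; auto.
  - right; apply IHA; lia.
Qed.

Lemma crit_min l A m : 0 < l -> (forall a, In a A -> m <= a) ->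
  crit (mp l A) m = cnt A m.
Proof.
  intros hl. induction A; simpl; intro H; [reflexivity|].
  rewrite IHA by auto.
  unfold indicator at 2. destruct (Req_EM_T (a + l) m).
  - specialize (H a (or_introl eq_refl)). lra.
  - lia.
Qed.

Lemma list_min (L : list R) : L <> nil -> exists m, In m L /\ forall x, In x L -> m <= x.
Proof.
  induction L as [|a L IH]; intro H; [congruence|].
  destruct L as [|b L'].
  - exists a; split; [left; auto|]. intros x [Hx|[]]; subst; lra.
  - destruct IH as [m [Hm1 Hm2]]; [discriminate|].
    destruct (Rle_dec a m).
    + exists a; split; [left; auto|]. intros x [Hx|Hx]; [subst; lra|].
      specialize (Hm2 x Hx); lra.
    + exists m; split; [right; auto|]. intros x [Hx|Hx]; [subst; lra|auto].
Qed.

Lemma crit_cons_eq a l f1 f2 : (forall g, crit ((a,l)::f1) g = crit ((a,l)::f2) g) ->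
  forall g, crit f1 g = crit f2 g.
Proof. intros H g; specialize (H g); simpl in H; lia. Qed.



Lemma cancel l (hl : 0 < l) : forall n A B, (length A + length B <= n)%nat ->
  (forall g, crit (mp l A) g = crit (mp l B) g) -> Permutation A B.
Proof.
  induction n; intros A B Hlen H.
  - destruct A; destruct B; simpl in Hlen; try lia. constructor.
  - destruct (list_eq_dec Req_EM_T (A ++ B) nil) as [E|E].
    + apply app_eq_nil in E; destruct E; subst; constructor.
    + destruct (list_min _ E) as [m [Hm1 Hm2]].
      assert (HA : forall a, In a A -> m <= a) by (intros; apply Hm2, in_or_app; auto).
      assert (HB : forall a, In a B -> m <= a) by (intros; apply Hm2, in_or_app; auto).
      pose proof (H m) as Hc.
      rewrite (crit_min l A m hl HA), (crit_min l B m hl HB) in Hc.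
      assert (InA : In m A /\ In m B).
      { apply in_app_or in Hm1; destruct Hm1 as [Hm1|Hm1].
        - pose proof (cnt_in _ _ Hm1). split; auto. apply cnt_pos; lia.
        - pose proof (cnt_in _ _ Hm1). split; auto. apply cnt_pos; lia. }
      destruct InA as [IA IB].
      destruct (in_split _ _ IA) as [A1 [A2 EA]].
      destruct (in_split _ _ IB) as [B1 [B2 EB]].
      assert (PA : Permutation A (m :: A1 ++ A2)) by (subst; apply Permutation_sym, Permutation_middle).
      assert (PB : Permutation B (m :: B1 ++ B2)) by (subst; apply Permutation_sym, Permutation_middle).
      assert (H' : forall g, crit (mp l (A1 ++ A2)) g = crit (mp l (B1 ++ B2)) g).
      { apply (crit_cons_eq m l). intro g.
        change ((m,l) :: mp l (A1 ++ A2)) with (mp l (m :: A1 ++ A2)).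
        change ((m,l) :: mp l (B1 ++ B2)) with (mp l (m :: B1 ++ B2)).
        unfold mp in *.         rewrite <- (crit_perm _ _ (Permutation_map _ PA)).
        rewrite <- (crit_perm _ _ (Permutation_map _ PB)). auto. }
      assert (Hl : (length (A1 ++ A2) + length (B1 ++ B2) <= n)%nat).
      { subst. rewrite !length_app in *. simpl in Hlen. lia. }
      specialize (IHn _ _ Hl H').
      eapply perm_trans; [exact PA|]. eapply perm_trans; [|apply Permutation_sym; exact PB].
      constructor; auto.
Qed.

Theorem proposition12 (l lt delta : R) (hl : 0 < l) (hlt : 0 < lt)
  (f1 f2 : barcode) :
  in_family l lt delta f1 -> in_family l lt delta f2 ->
  (forall g : R, crit f1 g = crit f2 g) ->
  barcode_eq f1 f2.
Proof.
  intros [t1 [A1 [P1 D1]]] [t2 [A2 [P2 D2]]] H.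
  unfold barcode_eq in *.
  set (c1 := (t1, lt) :: mp l A1) in *.
  set (c2 := (t2, lt) :: mp l A2) in *.
  assert (Hc : forall g, crit c1 g = crit c2 g).
  { intro g. rewrite <- (crit_perm _ _ P1), <- (crit_perm _ _ P2). auto. }
  rewrite (drift_perm _ _ P1) in D1. rewrite (drift_perm _ _ P2) in D2.
  eapply perm_trans; [exact P1|]. eapply perm_trans; [|apply Permutation_sym; exact P2].
  pose proof (S_crit (fun x => x) _ _ Hc) as E1.
  pose proof (S_crit (fun x => x * x) _ _ Hc) as E2.
  unfold c1, c2 in E1, E2, D1, D2. simpl in E1, E2, D1, D2.
  fold (mp l A1) (mp l A2) in *.
  rewrite !S_id in E1. rewrite !S_sq in E2.
  assert (EN : INR (length A1) = INR (length A2)).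
  { apply (Rmult_eq_reg_r l); lra. }
  rewrite EN in E2.
  assert (Hz : (t1 - t2) * (l - lt) = 0) by nra.
  apply Rmult_integral in Hz. destruct Hz as [Hz|Hz].
  - assert (t1 = t2) by lra. subst t2. unfold c1, c2. constructor.
    apply Permutation_map. apply (cancel l hl (length A1 + length A2)); auto.
    apply (crit_cons_eq t1 lt). exact Hc.
  - assert (lt = l) by lra. subst lt.
    change (Permutation (mp l (t1 :: A1)) (mp l (t2 :: A2))).
    apply Permutation_map. apply (cancel l hl (length (t1::A1) + length (t2::A2))); auto.
Qed.
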